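(* Let $t\in[0,1]$ and let $(h,k)\in[0,1]^2$ be a point of ROC space that outperforms both baseline classifiers, i.e. $\mathrm{Cost}(h,k,t)<\mathrm{Cost}(0,0,t)$ and $\mathrm{Cost}(h,k,t)<\mathrm{Cost}(1,1,t)$. Then the area of lesser classifiers of $(h,k)$ is $$A_t(h,k)=1+\frac{(1-k)^2}{2}+\frac{h^2}{2}-h(1-k)-\frac{(1-k)^2}{2t}-\frac{h^2}{2(1-t)}.$$
   Context: ROC space is $[0,1]^2$, a point $(x,y)$ representing a binary classifier with false positive rate $x$ and true positive rate $y$. For $t\in[0,1]$, the normalized expected cost of $(x,y)$ is $\mathrm{Cost}(x,y,t)=tx+(1-t)(1-y)$. The baseline classifiers are the points $(0,0)$ (label everything negative) and $(1,1)$ (label everything positive). The area of lesser classifiers $A_t(h,k)$ is the area (Lebesgue measure) of the set of points $(h',k')\in[0,1]^2$ with $\mathrm{Cost}(h',k',t)>\mathrm{Cost}(h,k,t)$. *)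

(* Defs.v *)
From mathcomp Require Import all_boot all_order all_algebra.
From mathcomp Require Import all_classical all_reals all_analysis.
Set Implicit Arguments. Unset Strict Implicit. Unset Printing Implicit Defensive.
Import Order.TTheory GRing.Theory Num.Theory.
Local Open Scope classical_set_scope.
Local Open Scope ring_scope.

Definition Cost {R : realType} (x y t : R) : R := t * x + (1 - t) * (1 - y).

Definition roc_square {R : realType} : set (R * R) :=
  [set p | (0 <= p.1 <= 1) /\ (0 <= p.2 <= 1)].

Definition area_lesser {R : realType} (t h k : R) : \bar R :=
  ((@lebesgue_measure R) \x (@lebesgue_measure R))%E
    (roc_square `&` [set p | Cost p.1 p.2 t > Cost h k t]).

(* Main.v *)
Require Import Defs.
From mathcomp Require Import all_boot all_order all_algebra.
From mathcomp Require Import all_classical all_reals all_analysis.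
From mathcomp Require Import ring lra.
Import Order.TTheory GRing.Theory Num.Theory.
Import numFieldNormedType.Exports.
Local Open Scope ring_scope.
Local Open Scope classical_set_scope.

Lemma ftc_lin (R : realType) (a b p : R) : 0 < p ->
  (\int[@lebesgue_measure R]_(x in `[0%R, p]) (a + b * x)%:E =
   (a * p + b / 2 * p ^+ 2)%:E)%E.
Proof.
move=> p0.
rewrite (@continuous_FTC2 R (fun x : R => a + b * x) (fun x : R => a * x + b / 2 * x ^+ 2))//=.
- by rewrite expr0n /= !mulr0 addr0 oppr0 adde0.
- apply: continuous_in_subspaceT => x _.
  apply: continuousD; first exact: cst_continuous.
  apply: continuousM; [exact: cst_continuous| exact: cvg_id].
- split.
  + by move=> x _; apply: derivableD; apply: derivableM => //; apply: exprn_derivable.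
  + apply: cvg_at_right_filter; apply: cvgD; apply: cvgM; (try exact: cvg_cst);
      [exact: cvg_id| exact: exprn_continuous].
  + apply: cvg_at_left_filter; apply: cvgD; apply: cvgM; (try exact: cvg_cst);
      [exact: cvg_id| exact: exprn_continuous].
- move=> x _; rewrite derive1E.
  rewrite derive_val.
  have E : forall r : R, r%:A = r by move=> r; rewrite /GRing.scale /= mulr1.
  rewrite !E /GRing.scale /=.
  by field.
Qed.

Theorem lemma22 (R : realType) (t h k : R) :
  0 <= t <= 1 -> 0 <= h <= 1 -> 0 <= k <= 1 ->
  Cost h k t < Cost 0 0 t -> Cost h k t < Cost 1 1 t ->
  area_lesser t h k =
    (1 + (1 - k) ^+ 2 / 2 + h ^+ 2 / 2 - h * (1 - k)
       - (1 - k) ^+ 2 / (2 * t) - h ^+ 2 / (2 * (1 - t)))%:E.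
Proof.
move=> /andP[t0 t1] /andP[h0 h1] /andP[k0 k1].
rewrite /Cost => H1 H2.
set c := t * h + (1 - t) * (1 - k) in H1 H2 *.
have {H1} H1 : c < 1 - t by move: H1; rewrite mulr0 add0r subr0 mulr1.
have {H2} H2 : c < t by move: H2; rewrite mulr1 subrr mulr0 addr0.
have c0 : 0 <= c by rewrite /c; apply: addr_ge0; apply: mulr_ge0; lra.
have tpos : 0 < t by lra.
have t1pos : 0 < 1 - t by lra.
have RHSE : 1 + (1 - k) ^+ 2 / 2 + h ^+ 2 / 2 - h * (1 - k)
       - (1 - k) ^+ 2 / (2 * t) - h ^+ 2 / (2 * (1 - t)) =
       1 - c ^+ 2 / (2 * t * (1 - t)).
  by rewrite /c; field; rewrite (gt_eqF t1pos) (gt_eqF tpos).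
rewrite RHSE.
pose alpha := 1 - c / (1 - t).
pose beta := t / (1 - t).
pose g x := alpha + beta * x.
pose F x := Order.min 1 (g x).
have gE x : (1 - t) * g x = 1 - t - c + t * x.
  rewrite /g /alpha /beta; field; lra.
have key x y : (y < g x) = (c < t * x + (1 - t) * (1 - y)).
  rewrite -(ltr_pM2l t1pos) gE; apply/idP/idP => ?; nra.
have alpha0 : 0 < alpha.
  rewrite /alpha subr_gt0 ltr_pdivrMr // mul1r //.
have gge x : 0 <= x -> alpha <= g x.
  move=> x0; rewrite /g lerDl; apply: mulr_ge0 => //.
  by rewrite /beta divr_ge0 // ltW.
pose S := (roc_square `&` [set p | Cost h k t < Cost p.1 p.2 t]) : set (R * R).
have sec x : lebesgue_measure (xsection S x) = ((EFin \o F) \_ `[0%R, 1%R]) x.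
  rewrite patchE; case: ifPn => [|xn].
    move=> /set_mem /= xin.
    move: xin; rewrite (@in_itv _ _ x) /= => /andP[x0 x1].
    have [gx1|gx1] := leP (g x) 1.
      have -> : xsection S x = `[0%R, g x[.
        apply/seteqP; split => y /=; rewrite /xsection /= in_setE /S /roc_square /Cost /= -/c (@in_itv _ _ y) /=.
          by move=> [[_ /andP[y0 y1]] Hc]; rewrite y0 key.
        move=> /andP[y0]; rewrite key => Hc; split => //; split; apply/andP; split => //.
        by move: Hc; rewrite -key; lra.
      rewrite lebesgue_measure_itv /= lte_fin (lt_le_trans alpha0 (gge _ x0)) sube0.
      by rewrite /F min_r.
    have -> : xsection S x = `[0%R, 1%R].
      apply/seteqP; split => y /=; rewrite /xsection /= in_setE /S /roc_square /Cost /= -/c (@in_itv _ _ y) /=.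
        by move=> [[_ /andP[y0 y1]] Hc]; rewrite y0 y1.
      move=> /andP[y0 y1]; split; first by split; apply/andP; split.
      by rewrite -key; lra.
    rewrite lebesgue_measure_itv /= lte_fin ltr01 sube0.
    by rewrite /F min_l // ltW.
  have -> : xsection S x = set0.
    apply/seteqP; split => y //=; rewrite /xsection /= in_setE /S /roc_square /=.
    move=> [[/andP[x0 x1] _] _]; move/negP: xn; apply; by apply/mem_set; rewrite /= (@in_itv _ _ x) /= x0 x1.
  by rewrite measure0.
rewrite /area_lesser /product_measure1 -/S.
have -> : lebesgue_measure \o xsection S = (EFin \o F) \_ `[0%R, 1%R].
  by apply/funext => x; rewrite /= sec.
rewrite -integral_mkcond.
have mF : measurable_fun setT F.
  apply: (@measurable_realfun.measurable_minr _ _ _ _ (cst 1) g); first exact: measurable_cst.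
  rewrite /g; apply: measurable_realfun.measurable_funD; first exact: measurable_cst.
  apply: measurable_realfun.measurable_funM; [exact: measurable_cst | exact: measurable_id].
have [c00|cpos] := eqVneq c 0.
  rewrite (eq_integral (cst 1%E)); last first.
    move=> x /set_mem /=; rewrite (@in_itv _ _ x) /= => /andP[x0 x1].
    rewrite /F min_l //; have := gE x; rewrite c00; nra.
  rewrite integral_cst; last exact: measurable_itv.
  rewrite (_ : _ `[0%R, 1%R] = 1%E); last first.
    by apply: etrans; first exact: lebesgue_measure_itv; rewrite /= lte_fin ltr01 sube0.
  by rewrite mul1e c00 expr0n /= mul0r subr0.
have c0' : 0 < c by rewrite lt_neqAle eq_sym cpos c0.
pose p := c / t.
have tp : t * p = c by rewrite /p; field; lra.
have p0 : 0 < p by rewrite /p divr_gt0.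
have p1 : p < 1 by rewrite /p ltr_pdivrMr // mul1r.
have U : `[0%R, 1%R] = `[0%R, p] `|` `]p, 1%R] :> set R.
  apply/seteqP; split => x /=.
    rewrite (@in_itv _ _ x) /= => /andP[x0 x1].
    have [xp|px] := leP x p; [left|right]; rewrite /= (@in_itv _ _ x) /=;
      apply/andP; split => //; lra.
  by move=> [|]; rewrite /= (@in_itv _ _ x) (@in_itv _ _ x) /= => /andP[? ?];
    apply/andP; split; lra.
rewrite U ge0_integral_setU; first last.
- apply/eqP/seteqP; split => x //= [].
  by rewrite /= (@in_itv _ _ x) (@in_itv _ _ x) /= => /andP[_ ?] /andP[? _]; lra.
- move=> x Hx; have x0 : 0 <= x.
    by case: Hx; rewrite /= (@in_itv _ _ x) /= => /andP[? ?]; lra.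
  rewrite /= lee_fin /F le_min ler01 /=.
  exact: le_trans (ltW alpha0) (gge _ x0).
- by apply/measurable_realfun.measurable_EFinP; apply: measurable_funTS.
- exact: measurable_itv.
- exact: measurable_itv.
rewrite [X in (X + _)%E](_ : _ = (alpha * p + beta / 2 * p ^+ 2)%:E); last first.
  rewrite -ftc_lin //; apply: eq_integral.
  move=> x /set_mem /=; rewrite (@in_itv _ _ x) /= => /andP[x0 xp].
  have txc : t * x <= c by rewrite -tp ler_pM2l.
  by rewrite /F min_r //; have := gE x; nra.
rewrite [X in (_ + X)%E](_ : _ = (1 - p)%:E); last first.
  rewrite (_ : (1 - p)%:E = (\int[lebesgue_measure]_(x in `]p, 1%R]) (cst 1%E) x)%E); last first.
    rewrite integral_cst; last exact: measurable_itv.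
    rewrite (_ : _ `]p, 1%R] = (1 - p)%:E) ?mul1e //.
    by apply: etrans; first exact: lebesgue_measure_itv; rewrite /= lte_fin p1 EFinB.
  apply: eq_integral.
  move=> x /set_mem /=; rewrite (@in_itv _ _ x) /= => /andP[px x1].
  have txc : c < t * x by rewrite -tp ltr_pM2l.
  by rewrite /F min_l //; have := gE x; nra.
rewrite -EFinD; congr EFin.
by rewrite /alpha /beta /p; field; rewrite (gt_eqF t1pos) (gt_eqF tpos).
Qed.
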